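(* Let $A\in\mathbb{C}^{n\times n}$ be accretive and $\theta\in[0,\pi/2)\cap\Psi(A)$. Let $A_h=(A+A^* )/2$ and $A_s=(A-A^* )/(2j)$. Then $\gamma_\theta(A)=\max\{\sqrt{g^\star},\sqrt{h^\star}\}$, where $g^\star$ and $h^\star$ are the optimal values of the semidefinite programs $$\min_{g,\tau}\ g\quad\text{s.t.}\quad A^*A-gI+\tau(-A_h\tan\theta+A_s)\le0,\ \tau\ge0,\ g\ge0,$$ $$\min_{h,\tau}\ h\quad\text{s.t.}\quad A^*A-hI+\tau(-A_h\tan\theta-A_s)\le0,\ \tau\ge0,\ h\ge0.$$
   Context: Matrix inequality $\le0$ means negative semidefinite. For sectorial $A$ (i.e. $0\notin\{x^*Ax:\|x\|=1\}$), write $A=T^*DT$ with $T$ nonsingular, $D$ diagonal unitary; the phases $\bar\phi(A)\ge\dots\ge\underline\phi(A)$ are the arguments of the diagonal entries of $D$ with $\bar\phi-\underline\phi<\pi$ and $(\bar\phi+\underline\phi)/2\in(-\pi,\pi]$, and $\Psi(A)=[\underline\phi(A),\bar\phi(A)]$. $A$ is accretive if it is sectorial with $\Psi(A)\subset(-\pi/2,\pi/2)$. $\mathcal{DW}(A)=\{(\mathrm{Re}\,x^*Ax,\mathrm{Im}\,x^*Ax,\|Ax\|^2):x\in\mathbb{C}^n,\|x\|=1\}$. For sectorial $A$ and $\theta\in[0,\pi)\cap\Psi(A)$, the constrained gain range is $\mathcal{R}_{\ge\theta}(A)=\{h\ge0:\ \exists z\in\mathbb{C},\ \angle z\notin(-\theta,\theta),\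 (\mathrm{Re}\,z,\mathrm{Im}\,z,h^2)\in\mathcal{DW}(A)\}$ (with $\angle z\in(-\pi,\pi]$), and the constrained gain is $\gamma_\theta(A)=\max\mathcal{R}_{\ge\theta}(A)$. *)

(* Defs.v *)
From HB Require Import structures.
From mathcomp Require Import all_boot all_order all_algebra.
From mathcomp Require Import all_classical all_reals.
From mathcomp Require Import sequences exp trigo.
From mathcomp Require Import complex.

Set Implicit Arguments.
Unset Strict Implicit.
Unset Printing Implicit Defensive.

Import Order.TTheory GRing.Theory Num.Theory.
Local Open Scope ring_scope.
Local Open Scope complex_scope.

Section Defs.
Variable R : realType.
Local Notation C := (R[i]).

Definition ctr (m n : nat) (A : 'M[C]_(m, n)) : 'M[C]_(n, m) :=
  (map_mx (fun z : C => z^*) A)^T.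

Definition qform (n : nat) (M : 'M[C]_n) (x : 'cV[C]_n) : C :=
  (ctr x *m M *m x) 0 0.

Definition sqnorm (n : nat) (x : 'cV[C]_n) : C := (ctr x *m x) 0 0.

(* negative semidefinite: M <= 0, i.e. x^* M x <= 0 (real and nonpositive) for all x *)
Definition nsd (n : nat) (M : 'M[C]_n) : Prop := forall x : 'cV[C]_n, qform M x <= 0.

Definition expj (phi : R) : C := cos phi +i* sin phi.

Definition is_angle (z : C) (phi : R) : Prop :=
  - pi < phi <= pi /\ z = `|z| * expj phi.

Definition sectorial (n : nat) (A : 'M[C]_n) : Prop :=
  forall x : 'cV[C]_n, sqnorm x = 1 -> qform A x != 0.

Definition phases (n : nat) (A : 'M[C]_n) (phi : 'I_n -> R) : Prop :=
  (exists T : 'M[C]_n, T \in unitmx /\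
     A = ctr T *m diag_mx (\row_k expj (phi k)) *m T) /\
  (exists imax imin : 'I_n,
     (forall k, phi imin <= phi k <= phi imax) /\
     phi imax - phi imin < pi /\
     - pi < (phi imax + phi imin) / 2 <= pi).

(* theta in Psi(A) = [min phase, max phase] *)
Definition in_phase_range (n : nat) (phi : 'I_n -> R) (theta : R) : Prop :=
  (exists i, phi i <= theta) /\ (exists i, theta <= phi i).

Definition accretive (n : nat) (A : 'M[C]_n) : Prop :=
  sectorial A /\ exists phi, phases A phi /\ forall k, - (pi / 2) < phi k < pi / 2.

Definition gain_range (n : nat) (A : 'M[C]_n) (theta : R) : set R :=
  [set h | 0 <= h /\ exists z : C,
      (forall phi, is_angle z phi -> ~ (- theta < phi < theta)) /\
      exists x : 'cV[C]_n, sqnorm x = 1 /\ qform A x = z /\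
        sqnorm (A *m x) = (h ^+ 2)%:C].

Definition is_max_of (S : set R) (m : R) : Prop :=
  S m /\ forall h, S h -> h <= m.

Definition herm_part (n : nat) (A : 'M[C]_n) : 'M[C]_n := (2%:R)^-1 *: (A + ctr A).
Definition skew_part (n : nat) (A : 'M[C]_n) : 'M[C]_n :=
  (2%:R * 'i)^-1 *: (A - ctr A).

(* feasible values of the two SDPs; sgn = 1 for the first, sgn = -1 for the second *)
Definition sdp_feasible (n : nat) (A : 'M[C]_n) (theta : R) (sgn : R) : set R :=
  [set g | 0 <= g /\ exists tau : R, 0 <= tau /\
     nsd (ctr A *m A - g%:C%:M
          + tau%:C *: (- ((tan theta)%:C *: herm_part A) + sgn%:C *: skew_part A))].

End Defs.

(* Main.v *)
Require Import Defs.
From HB Require Import structures.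
From mathcomp Require Import all_boot all_order all_algebra.
From mathcomp Require Import all_classical all_reals.
From mathcomp Require Import sequences exp trigo.
From mathcomp Require Import complex.
From mathcomp Require Import topology normedtype derive.
From mathcomp Require Import ring lra.
Import numFieldNormedType.Exports.
Import Order.TTheory GRing.Theory Num.Theory.
Local Open Scope ring_scope.
Local Open Scope complex_scope.
Set Implicit Arguments.
Unset Strict Implicit.
Unset Printing Implicit Defensive.
Section Alg.
Variable R : realType.
Local Notation C := (R[i]).
Local Notation re := (@complex.Re R).
Local Notation im := (@complex.Im R).

Lemma reD (a b : C) : re (a + b) = re a + re b. Proof. by case: a; case: b. Qed.
Lemma imD (a b : C) : im (a + b) = im a + im b. Proof. by case: a; case: b. Qed.
Lemma reN (a : C) : re (- a) = - re a. Proof. by case: a. Qed.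
Lemma imN (a : C) : im (- a) = - im a. Proof. by case: a. Qed.
Lemma reM (a b : C) : re (a * b) = re a * re b - im a * im b. Proof. by case: a; case: b. Qed.
Lemma imM (a b : C) : im (a * b) = re a * im b + im a * re b. Proof. by case: a => ? ?; case: b => ? ? /=; ring. Qed.
Lemma reJ (a : C) : re (conjc a) = re a. Proof. by case: a. Qed.
Lemma imJ (a : C) : im (conjc a) = - im a. Proof. by case: a. Qed.
Lemma reR (k : R) : re (k%:C) = k. Proof. by []. Qed.
Lemma imR (k : R) : im (k%:C) = 0. Proof. by []. Qed.
Lemma re0 : re 0 = 0. Proof. by []. Qed.
Lemma re_sum (I : Type) (r : seq I) (P : pred I) (F : I -> C) :
  re (\sum_(i <- r | P i) F i) = \sum_(i <- r | P i) re (F i).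
Proof. by apply: (big_morph re reD re0). Qed.
Lemma im_sum (I : Type) (r : seq I) (P : pred I) (F : I -> C) :
  im (\sum_(i <- r | P i) F i) = \sum_(i <- r | P i) im (F i).
Proof. by apply: (big_morph im imD (erefl _)). Qed.
Lemma conj_real (a : C) : conjc a = a -> a = (re a)%:C.
Proof. case: a => a b /= [] h; congr Complex; lra. Qed.
Lemma re_conjM (a : C) : conjc a * a = (re a ^+ 2 + im a ^+ 2)%:C.
Proof. case: a => a b; rewrite /= /GRing.mul /=; congr Complex; ring. Qed.

Lemma ctr_mul m n p (A : 'M[C]_(m,n)) (B : 'M[C]_(n,p)) : ctr (A *m B) = ctr B *m ctr A.
Proof.
apply/matrixP => i j; rewrite !mxE rmorph_sum; apply: eq_bigr => k _.
by rewrite !mxE rmorphM mulrC.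
Qed.
Lemma ctrK m n (A : 'M[C]_(m,n)) : ctr (ctr A) = A.
Proof. by apply/matrixP => i j; rewrite !mxE conjcK. Qed.
Lemma ctrD m n (A B : 'M[C]_(m,n)) : ctr (A + B) = ctr A + ctr B.
Proof. by apply/matrixP => i j; rewrite !mxE rmorphD. Qed.
Lemma ctrN m n (A : 'M[C]_(m,n)) : ctr (- A) = - ctr A.
Proof. by apply/matrixP => i j; rewrite !mxE rmorphN. Qed.
Lemma ctrZ m n (c : C) (A : 'M[C]_(m,n)) : ctr (c *: A) = conjc c *: ctr A.
Proof. by apply/matrixP => i j; rewrite !mxE rmorphM. Qed.

Definition cr n (M : 'M[C]_n) (x y : 'cV[C]_n) : C := (ctr x *m M *m y) 0 0.

Lemma qformD n (M1 M2 : 'M[C]_n) x : qform (M1 + M2) x = qform M1 x + qform M2 x.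
Proof. by rewrite /qform mulmxDr mulmxDl mxE. Qed.
Lemma qformN n (M : 'M[C]_n) x : qform (- M) x = - qform M x.
Proof. by rewrite /qform mulmxN mulNmx mxE. Qed.
Lemma qformZ n (c : C) (M : 'M[C]_n) x : qform (c *: M) x = c * qform M x.
Proof. by rewrite /qform -scalemxAr -scalemxAl mxE. Qed.
Lemma qform_scalar n (c : C) (x : 'cV[C]_n) : qform (c%:M) x = c * sqnorm x.
Proof. by rewrite /qform /sqnorm mul_mx_scalar -scalemxAl mxE. Qed.
Lemma qform1 n (x : 'cV[C]_n) : qform 1%:M x = sqnorm x.
Proof. by rewrite qform_scalar mul1r. Qed.
Lemma qform_AA n (A : 'M[C]_n) x : qform (ctr A *m A) x = sqnorm (A *m x).
Proof. by rewrite /qform /sqnorm ctr_mul !mulmxA. Qed.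
Lemma qform_T n (T D : 'M[C]_n) x : qform (ctr T *m D *m T) x = qform D (T *m x).
Proof. by rewrite /qform ctr_mul !mulmxA. Qed.
Lemma conj_qform n (M : 'M[C]_n) x : conjc (qform M x) = qform (ctr M) x.
Proof.
have -> : conjc (qform M x) = (ctr (ctr x *m M *m x)) 0 0 by rewrite /qform /ctr !mxE.
by rewrite /qform !ctr_mul ctrK mulmxA.
Qed.
Lemma sqnorm_real n (x : 'cV[C]_n) : sqnorm x = (re (sqnorm x))%:C.
Proof.
apply: conj_real; rewrite -qform1 conj_qform.
suff -> : ctr (1%:M : 'M[C]_n) = 1%:M by [].
apply/matrixP => i j; rewrite !mxE eq_sym; case: (i == j) => /=; by apply/eqP; rewrite eq_complex /= oppr0 !eqxx.
Qed.
Lemma qformZx n (c : C) (M : 'M[C]_n) x : qform M (c *: x) = (conjc c * c) * qform M x.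
Proof.
rewrite /qform ctrZ -!scalemxAl -!scalemxAr !mxE; ring.
Qed.
Lemma qform_addx n (M : 'M[C]_n) x y :
  qform M (x + y) = qform M x + qform M y + cr M x y + cr M y x.
Proof.
rewrite /qform /cr ctrD mulmxDl mulmxDr !mulmxDl.
move: (ctr x *m M *m x) (ctr y *m M *m x) (ctr x *m M *m y) (ctr y *m M *m y) => a b c d.
rewrite !mxE; move: (a 0 0) (b 0 0) (c 0 0) (d 0 0) => a' b' c' d'.
ring.
Qed.
Lemma crZ n (M : 'M[C]_n) x y (c : C) : cr M x (c *: y) = c * cr M x y.
Proof. by rewrite /cr -scalemxAr mxE. Qed.
Lemma crZl n (M : 'M[C]_n) x y (c : C) : cr M (c *: y) x = conjc c * cr M y x.
Proof. by rewrite /cr ctrZ -!scalemxAl mxE. Qed.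

Definition Kc n (M : 'M[C]_n) x y := cr M x y + conjc (cr M y x).

Lemma re_cross_alg (qx qy p q c : C) :
  re (qx + conjc c * c * qy + c * p + conjc c * q) =
  re qx + (re c ^+ 2 + im c ^+ 2) * re qy + re (c * (p + conjc q)).
Proof.
case: qx => a1 a2; case: qy => b1 b2; case: p => p1 p2; case: q => q1 q2; case: c => c1 c2.
rewrite !(reD, reM, imM, imD, reJ, imJ) /=; ring.
Qed.

Lemma re_cross n (M : 'M[C]_n) x y (c : C) :
  re (qform M (x + c *: y)) =
  re (qform M x) + (re c ^+ 2 + im c ^+ 2) * re (qform M y) + re (c * Kc M x y).
Proof. by rewrite qform_addx qformZx crZ crZl re_cross_alg. Qed.

Lemma sqnorm_sum n (x : 'cV[C]_n) :
  re (sqnorm x) = \sum_i (re (x i 0) ^+ 2 + im (x i 0) ^+ 2).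
Proof.
rewrite /sqnorm mxE re_sum; apply: eq_bigr => i _.
by rewrite /ctr !mxE re_conjM.
Qed.
Lemma sqnorm_ge0 n (x : 'cV[C]_n) : 0 <= re (sqnorm x).
Proof. by rewrite sqnorm_sum; apply: sumr_ge0 => i _; rewrite addr_ge0 ?sqr_ge0. Qed.
Lemma sqnorm_eq0 n (x : 'cV[C]_n) : re (sqnorm x) = 0 -> x = 0.
Proof.
rewrite sqnorm_sum => /eqP; rewrite psumr_eq0 => [/allP H|i _]; last first.
  by rewrite addr_ge0 ?sqr_ge0.
apply/matrixP => i j; rewrite (ord1 j) mxE.
have /H : i \in index_enum 'I_n by rewrite mem_index_enum.
rewrite /= paddr_eq0 ?sqr_ge0 // !sqrf_eq0 => /andP[/eqP h1 /eqP h2].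
by move: (x i 0) h1 h2 => [a b] /= -> ->.
Qed.
End Alg.

Section Hom.
Variable R : realType.
Local Notation C := (R[i]).
Local Notation re := (@complex.Re R).
Local Notation im := (@complex.Im R).

Definition unitv n (x : 'cV[C]_n) := re (sqnorm x) = 1.

Lemma unitvE n (x : 'cV[C]_n) : sqnorm x = 1 <-> unitv x.
Proof.
rewrite /unitv; split => [->//|h]; by rewrite sqnorm_real h.
Qed.

Lemma reRM (k : R) (z : C) : re (k%:C * z) = k * re z.
Proof. by rewrite reM /= mul0r subr0. Qed.

Lemma qform0x n (M : 'M[C]_n) : qform M 0 = 0.
Proof. by rewrite /qform mulmx0 mxE. Qed.

Lemma normalize n (x : 'cV[C]_n) : x != 0 ->
  exists u, unitv u /\ forall M, qform M x = (re (sqnorm x))%:C * qform M u.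
Proof.
move=> x0; set s := re (sqnorm x).
have s0 : 0 < s.
  rewrite lt_neqAle sqnorm_ge0 andbT eq_sym; apply/eqP => /sqnorm_eq0 h.
  by move: x0; rewrite h eqxx.
set r := Num.sqrt s.
have r0 : 0 < r by rewrite sqrtr_gt0.
have rr : r ^+ 2 = s by rewrite sqr_sqrtr // ltW.
have key : forall M, qform M ((r^-1)%:C *: x) = (s^-1)%:C * qform M x.
  move=> M; rewrite qformZx conjc_real -rmorphM; congr (_ * _); congr (_%:C).
  by rewrite -invrM ?unitfE ?gt_eqF // -expr2 rr.
exists ((r^-1)%:C *: x); split.
  rewrite /unitv -qform1 key qform1 reRM mulVf // gt_eqF //.
move=> M; rewrite key mulrA -rmorphM divff ?gt_eqF // mul1r //.
Qed.

Lemma homog n (M : 'M[C]_n) :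
  (forall u, unitv u -> 0 <= re (qform M u)) -> forall x, 0 <= re (qform M x).
Proof.
move=> H x; have [->|x0] := eqVneq x 0; first by rewrite qform0x.
have [u [uu ->]] := normalize x0.
by rewrite reRM mulr_ge0 ?sqnorm_ge0 ?H.
Qed.
End Hom.

Section Cont.
Variable R : realType.
Local Notation C := (R[i]).
Local Notation re := (@complex.Re R).
Local Notation im := (@complex.Im R).

Definition cv n (v : 'rV[R]_(n + n)) : 'cV[C]_n :=
  \col_i (v 0 (lshift n i) +i* v 0 (rshift n i)).
Definition rv n (x : 'cV[C]_n) : 'rV[R]_(n + n) :=
  row_mx (\row_i re (x i 0)) (\row_i im (x i 0)).
Lemma cv_rv n (x : 'cV[C]_n) : cv (rv x) = x.
Proof.
apply/matrixP => i j; rewrite /cv /rv (ord1 j) mxE (row_mxEl (\row_i0 re (x i0 0))) (row_mxEr (\row_i0 re (x i0 0))) !mxE.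
by case: (x i 0).
Qed.

Definition rcont m (f : 'rV[R]_m -> R) := continuous f.
Definition cc m (F : 'rV[R]_m -> C) := rcont (fun v => re (F v)) /\ rcont (fun v => im (F v)).

Lemma rcD m (f g : 'rV[R]_m -> R) : rcont f -> rcont g -> rcont (fun v => f v + g v).
Proof. by move=> hf hg x; exact: (cvgD (hf x) (hg x)). Qed.
Lemma rcN m (f : 'rV[R]_m -> R) : rcont f -> rcont (fun v => - f v).
Proof. by move=> hf x; exact: (cvgN (hf x)). Qed.
Lemma rcM m (f g : 'rV[R]_m -> R) : rcont f -> rcont g -> rcont (fun v => f v * g v).
Proof. by move=> hf hg x; exact: (cvgM (hf x) (hg x)). Qed.
Lemma rcC m (k : R) : rcont (fun _ : 'rV[R]_m => k).
Proof. by move=> x; apply: cst_continuous. Qed.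
Lemma rcMax m (f g : 'rV[R]_m -> R) : rcont f -> rcont g -> rcont (fun v => Num.max (f v) (g v)).
Proof. by move=> hf hg x; exact: (continuous_max (hf x) (hg x)). Qed.
Lemma rc_coord m (j : 'I_m) : rcont (fun v : 'rV[R]_m => v 0 j).
Proof. exact: coord_continuous. Qed.
Lemma rc_ext m (f g : 'rV[R]_m -> R) : (forall v, f v = g v) -> rcont f -> rcont g.
Proof. by move=> e; have -> : f = g by apply: funext. Qed.
End Cont.

Section EVT.
Variable R : realType.
Local Notation C := (R[i]).
Local Notation re := (@complex.Re R).
Local Notation im := (@complex.Im R).

Lemma cc_ext m (F G : 'rV[R]_m -> C) : (forall v, F v = G v) -> cc F -> cc G.
Proof. by move=> e; have -> : F = G by apply: funext. Qed.
Lemma ccC m (k : C) : cc (fun _ : 'rV[R]_m => k).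
Proof. by split; apply: rcC. Qed.
Lemma ccD m (F G : 'rV[R]_m -> C) : cc F -> cc G -> cc (fun v => F v + G v).
Proof.
move=> [f1 f2] [g1 g2]; split.
  by apply: (rc_ext (fun v => esym (reD _ _))); apply: rcD.
by apply: (rc_ext (fun v => esym (imD _ _))); apply: rcD.
Qed.
Lemma ccM m (F G : 'rV[R]_m -> C) : cc F -> cc G -> cc (fun v => F v * G v).
Proof.
move=> [f1 f2] [g1 g2]; split.
  apply: (rc_ext (fun v => esym (reM _ _))).
  by apply: rcD; [apply: rcM|apply: rcN; apply: rcM].
by apply: (rc_ext (fun v => esym (imM _ _))); apply: rcD; apply: rcM.
Qed.
Lemma ccJ m (F : 'rV[R]_m -> C) : cc F -> cc (fun v => conjc (F v)).
Proof.
move=> [f1 f2]; split.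
  by apply: (rc_ext (fun v => esym (reJ _))).
by apply: (rc_ext (fun v => esym (imJ _))); apply: rcN.
Qed.
Lemma cc_sum m (I : Type) (r : seq I) (F : I -> 'rV[R]_m -> C) :
  (forall i, cc (F i)) -> cc (fun v => \sum_(i <- r) F i v).
Proof.
move=> H; elim: r => [|a r IH].
  by apply: (cc_ext (fun v => esym (big_nil _ _ _ _))); apply: ccC.
apply: (cc_ext (fun v => esym (big_cons _ _ _ _ _ _))); exact: ccD.
Qed.
Lemma cc_cv n (i : 'I_n) : cc (fun v : 'rV[R]_(n + n) => cv v i 0).
Proof.
split.
  apply: (rc_ext _ (rc_coord (j:=lshift n i))).
  by move=> v; rewrite /cv mxE.
apply: (rc_ext _ (rc_coord (j:=rshift n i))).
by move=> v; rewrite /cv mxE.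
Qed.
Lemma rc_qform n (M : 'M[C]_n) : rcont (fun v : 'rV[R]_(n + n) => re (qform M (cv v))).
Proof.
suff [] : cc (fun v : 'rV[R]_(n + n) => qform M (cv v)) by [].
apply: (cc_ext (fun v => esym (mxE _ _ _ _))).
apply: cc_sum => j; apply: ccM; last exact: cc_cv.
apply: (cc_ext (fun v => esym (mxE _ _ _ _))).
apply: cc_sum => i; apply: ccM; last exact: ccC.
apply: (cc_ext (fun v => esym (mxE _ _ _ _))).
apply: (cc_ext (fun v => esym (mxE _ _ _ _))).
by apply: ccJ; apply: cc_cv.
Qed.
End EVT.

Section EVT2.
Local Open Scope classical_set_scope.
Local Open Scope ring_scope.
Local Open Scope complex_scope.
Variable R : realType.
Local Notation C := (R[i]).
Local Notation re := (@complex.Re R).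
Local Notation im := (@complex.Im R).

Lemma rc_sqnorm n : rcont (fun v : 'rV[R]_(n + n) => re (sqnorm (cv v))).
Proof. by apply: (rc_ext _ (rc_qform (M:=1%:M))) => v; rewrite qform1. Qed.

Lemma cube_bound n (v : 'rV[R]_(n + n)) : unitv (cv v) -> forall k, -1 <= v 0 k <= 1.
Proof.
rewrite /unitv sqnorm_sum => h k.
have key : forall i, (re (cv v i 0) ^+ 2 + im (cv v i 0) ^+ 2) <= 1.
  move=> i; rewrite -h (bigD1 i) //= lerDl sumr_ge0 // => j _.
  by rewrite addr_ge0 ?sqr_ge0.
rewrite -(splitK k); case: (fintype.split k) => i /=; have := key i; rewrite /cv !mxE /=;
  set a := v 0 _; set b := v 0 _ => hab.
  have : a ^+ 2 <= 1 by move: (sqr_ge0 b) => ?; lra.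
  by move=> ha; apply/andP; split; nra.
have : b ^+ 2 <= 1 by move: (sqr_ge0 a) => ?; lra.
by move=> ha; apply/andP; split; nra.
Qed.

Lemma evt n (f g : 'cV[C]_n -> R) :
  rcont (fun v : 'rV[R]_(n + n) => f (cv v)) -> rcont (fun v : 'rV[R]_(n + n) => g (cv v)) ->
  (exists x, unitv x /\ 0 <= g x) ->
  exists x0, [/\ unitv x0, 0 <= g x0 & forall x, unitv x -> 0 <= g x -> f x <= f x0].
Proof.
move=> cf cg [x1 [u1 g1]].
pose K := (fun v : 'rV[R]_(n + n) => re (sqnorm (cv v))) @^-1` [set x | x = 1] `&`
          (fun v : 'rV[R]_(n + n) => g (cv v)) @^-1` [set r | 0 <= r].
have cK : closed K.
  apply: closedI.
    by apply: (proj1 (continuous_closedP _) (@rc_sqnorm n)); apply: closed_eq.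
  by apply: (proj1 (continuous_closedP _) cg); apply: closed_ge.
have Kcube : K `<=` [set v : 'rV[R]_(n + n) | forall i, v ord0 i \in `[(-1 : R), 1]].
  move=> v [/= h1 h2] i; have := cube_bound h1 i.
  by rewrite /= in_itv /=.
have compK : compact K.
  apply: (subclosed_compact cK _ Kcube).
  by apply: (@rV_compact _ _ (fun=> `[(-1 : R), 1]%classic)) => _; apply: segment_compact.
have K0 : (K !=set0)%classic.
  by exists (rv x1); rewrite /K /= cv_rv; split.
have [c Kc cmax] := compact_EVT_max K0 compK (continuous_subspaceT cf).
move: Kc; rewrite inE => -[/= c1 c2].
exists (cv c); split => // x ux gx.
have := cmax (rv x); rewrite !cv_rv; apply.
by rewrite inE /K /= cv_rv.
Qed.
End EVT2.

Section SLemma.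
Local Open Scope classical_set_scope.
Local Open Scope ring_scope.
Local Open Scope complex_scope.
Variable R : realType.
Local Notation C := (R[i]).
Local Notation re := (@complex.Re R).
Local Notation im := (@complex.Im R).

Lemma phase_choice (k1 k2 : C) :
  exists c : C, [/\ re c ^+ 2 + im c ^+ 2 = 1, re (c * k1) = 0 & re (c * k2) <= 0].
Proof.
suff [c0 [h1 h2]] : exists c0 : C, re c0 ^+ 2 + im c0 ^+ 2 = 1 /\ re (c0 * k1) = 0.
  have [le|gt] := lerP (re (c0 * k2)) 0.
    by exists c0; split.
  exists (- c0); split.
  - by rewrite reN imN !sqrrN.
  - by rewrite mulNr reN h2 oppr0.
  - by rewrite mulNr reN; lra.
set a := re k1; set b := im k1.
have [s0|s0] := eqVneq (a ^+ 2 + b ^+ 2) 0.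
  have a0 : a = 0 by move: s0 (sqr_ge0 a) (sqr_ge0 b) => ? ? ?; apply/eqP; rewrite -sqrf_eq0; apply/eqP; lra.
  have b0 : b = 0 by move: s0 (sqr_ge0 a) (sqr_ge0 b) => ? ? ?; apply/eqP; rewrite -sqrf_eq0; apply/eqP; lra.
  exists 1; split; first by rewrite /= expr1n expr0n /= addr0.
  by rewrite reM -/a -/b a0 b0 !mulr0 subr0.
have sp : 0 < a ^+ 2 + b ^+ 2 by rewrite lt_neqAle eq_sym s0 addr_ge0 ?sqr_ge0.
set r := Num.sqrt (a ^+ 2 + b ^+ 2).
have rp : 0 < r by rewrite sqrtr_gt0.
have rr : r ^+ 2 = a ^+ 2 + b ^+ 2 by rewrite sqr_sqrtr // ltW.
exists ((b / r) +i* (a / r)); split.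
  rewrite /= !expr_div_n rr -mulrDl addrC divff //; lra.
by rewrite reM /= -/a -/b; field; lra.
Qed.

Lemma qformZr n (M : 'M[C]_n) (a : R) x : re (qform M (a%:C *: x)) = a ^+ 2 * re (qform M x).
Proof. by rewrite qformZx conjc_real -rmorphM reRM expr2. Qed.

Lemma dines n (Mb Mq : 'M[C]_n) x y :
  re (qform Mb x) < 0 -> 0 < re (qform Mb y) ->
  exists w, re (qform Mb w) = 0 /\
    re (qform Mq w) <= re (qform Mb y) * re (qform Mq x) - re (qform Mb x) * re (qform Mq y).
Proof.
move=> bx by_.
set a := Num.sqrt (re (qform Mb y)); set d := Num.sqrt (- re (qform Mb x)).
have aa : a ^+ 2 = re (qform Mb y) by rewrite sqr_sqrtr // ltW.
have dd : d ^+ 2 = - re (qform Mb x) by rewrite sqr_sqrtr // oppr_ge0 ltW.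
have [c [c1 c2 c3]] := phase_choice (Kc Mb (a%:C *: x) (d%:C *: y)) (Kc Mq (a%:C *: x) (d%:C *: y)).
exists (a%:C *: x + c *: (d%:C *: y)); split.
  rewrite (re_cross Mb (a%:C *: x) (d%:C *: y) c) c1 c2 mul1r (qformZr Mb a x) (qformZr Mb d y) aa dd.
  move: (re (qform Mb x)) (re (qform Mb y)) => u v; ring.
rewrite (re_cross Mq (a%:C *: x) (d%:C *: y) c) c1 mul1r (qformZr Mq a x) (qformZr Mq d y) aa dd.
move: c3; move: (re (c * _)) => k hk.
move: (re (qform Mb x)) (re (qform Mb y)) (re (qform Mq x)) (re (qform Mq y)) => u v u' v'.
lra.
Qed.
End SLemma.

Section SLemma2.
Local Open Scope classical_set_scope.
Local Open Scope ring_scope.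
Local Open Scope complex_scope.
Variable R : realType.
Local Notation C := (R[i]).
Local Notation re := (@complex.Re R).
Local Notation im := (@complex.Im R).

Lemma ratio_le (bx qx by_ qy : R) : bx < 0 -> 0 < by_ ->
  0 <= by_ * qx - bx * qy -> qx / bx <= qy / by_.
Proof.
move=> hx hy h.
rewrite -subr_ge0.
have -> : qy / by_ - qx / bx = (by_ * qx - bx * qy) / (- (bx * by_)).
  by field; apply/andP; split; [exact: lt0r_neq0 | exact: ltr0_neq0].
by rewrite divr_ge0 // oppr_ge0 ltW // nmulr_rlt0.
Qed.

Lemma slemma n (Mb Mq : 'M[C]_n) (eps : R) : 0 < eps ->
  (forall x, unitv x -> 0 <= re (qform Mb x) -> eps <= re (qform Mq x)) ->
  exists tau, 0 <= tau /\ forall x, 0 <= re (qform Mq x) - tau * re (qform Mb x).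
Proof.
move=> e0 H.
set fb := fun x => re (qform Mb x); set fq := fun x => re (qform Mq x).
have H0 : forall x, 0 <= fb x -> 0 <= fq x.
  move=> x; have [->|x0] := eqVneq x 0; first by rewrite /fq qform0x.
  have [u [uu eu]] := normalize x0.
  have sp : 0 < re (sqnorm x).
    rewrite lt_neqAle sqnorm_ge0 andbT eq_sym; apply/eqP => /sqnorm_eq0 h.
    by move: x0; rewrite h eqxx.
  rewrite /fb /fq !eu !reRM pmulr_rge0 // => hb.
  by rewrite pmulr_rge0 //; apply: le_trans (H u uu hb); apply: ltW.
suff [tau [t0 ht]] : exists tau, 0 <= tau /\ forall u, unitv u -> 0 <= fq u - tau * fb u.
  exists tau; split => // x.
  have -> : re (qform Mq x) - tau * re (qform Mb x) = re (qform (Mq - tau%:C *: Mb) x).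
    by rewrite qformD qformN qformZ reD reN reRM.
  apply: homog => u uu; rewrite qformD qformN qformZ reD reN reRM; exact: ht.
have [[y [uy by0]]|nex] := pselect (exists y, unitv y /\ 0 < fb y).
  pose T0 := [set r : R | r = 0 \/ exists x, [/\ unitv x, fb x < 0 & r = fq x / fb x]].
  have ub : forall y', unitv y' -> 0 < fb y' -> forall r, T0 r -> r <= fq y' / fb y'.
    move=> y' uy' by' r [->|[x [ux bx ->]]].
      by apply: divr_ge0; [exact: le_trans (ltW e0) (H _ uy' (ltW by')) | exact: ltW].
    apply: ratio_le => //.
    have [w [w1 w2]] := dines Mq bx by'.
    by apply: le_trans w2; apply: H0; rewrite /fb w1.
  have T00 : T0 0 by left.
  have hs : has_sup T0 by split; [exists 0 | exists (fq y / fb y); exact: ub].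
  exists (sup T0); split; first exact: sup_upper_bound.
  move=> x ux.
  have [bx|bx|bx] := ltgtP (fb x) 0.
  - have : fq x / fb x <= sup T0 by apply: sup_upper_bound => //; right; exists x.
    rewrite ler_ndivrMr // => h; lra.
  - have : sup T0 <= fq x / fb x by apply: ge_sup; [exists 0 | exact: ub].
    rewrite ler_pdivlMr // => h; lra.
  - rewrite /fb /fq in bx *; rewrite bx mulr0 subr0.
    by apply: le_trans (ltW e0) (H _ ux _); rewrite bx.
have nb : forall z, unitv z -> fb z <= 0.
  by move=> z uz; rewrite leNgt; apply/negP => h; apply: nex; exists z.
have [[z uz]|nou] := pselect (exists z : 'cV[C]_n, unitv z); last first.
  by exists 0; split => // u uu; exfalso; apply: nou; exists u.
set h := fun x => Num.max (- fb x) (fq x - eps / 2).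
have [x0 [u0 _ m0]] : exists x0, [/\ unitv x0, 0 <= (fun _ => 0 : R) x0 &
      forall x, unitv x -> 0 <= (fun _ => 0 : R) x -> - h x <= - h x0].
  apply: evt.
  - apply: rcN; apply: rcMax; first by apply: rcN; exact: rc_qform.
    by apply: rcD; [exact: rc_qform | exact: rcC].
  - exact: rcC.
  - by exists z.
have [x1 [u1 _ m1]] : exists x1, [/\ unitv x1, 0 <= (fun _ => 0 : R) x1 &
      forall x, unitv x -> 0 <= (fun _ => 0 : R) x -> - fq x <= - fq x1].
  apply: evt.
  - by apply: rcN; exact: rc_qform.
  - exact: rcC.
  - by exists z.
set d := h x0.
have d0 : 0 < d.
  rewrite /d /h; have [b0|b0] := lerP 0 (fb x0).
    have := H _ u0 b0; rewrite -/(fq x0) => hq.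
    rewrite lt_max; apply/orP; right; lra.
  by rewrite lt_max; apply/orP; left; lra.
exists (Num.max 0 (- fq x1) / d); split.
  by apply: divr_ge0; [rewrite le_max lexx | exact: ltW].
move=> x ux.
have hx : d <= h x by rewrite -lerN2; apply: m0.
have qx : fq x1 <= fq x by rewrite -lerN2; apply: m1.
have bx := nb _ ux.
have t0 : 0 <= Num.max 0 (- fq x1) / d by apply: divr_ge0; [rewrite le_max lexx | exact: ltW].
have [bd|bd] := lerP d (- fb x).
  have : Num.max 0 (- fq x1) / d * d <= Num.max 0 (- fq x1) / d * (- fb x).
    by apply: ler_wpM2l.
  rewrite divfK ?gt_eqF // => h1.
  have : - fq x1 <= Num.max 0 (- fq x1) by rewrite le_max lexx orbT.
  move=> h2; rewrite mulrN in h1; lra.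
have : d <= fq x - eps / 2.
  move: hx; rewrite /h le_max => /orP[h1|//]; lra.
move=> h1.
have : 0 <= Num.max 0 (- fq x1) / d * (- fb x) by rewrite mulr_ge0 // oppr_ge0.
rewrite mulrN => h2; lra.
Qed.
End SLemma2.

Section KeyLemma.
Local Open Scope classical_set_scope.
Local Open Scope ring_scope.
Local Open Scope complex_scope.
Variable R : realType.
Local Notation C := (R[i]).
Local Notation re := (@complex.Re R).
Local Notation im := (@complex.Im R).

Lemma two_neq0 : (2%:R : C) != 0.
Proof. by rewrite pnatr_eq0. Qed.
Lemma i_neq0 : ('i : C) != 0.
Proof. by apply/eqP; case; move/eqP; rewrite oner_eq0. Qed.

Lemma qform_herm n (A : 'M[C]_n) x : qform (herm_part A) x = (re (qform A x))%:C.
Proof.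
by rewrite /herm_part qformZ qformD -conj_qform addcJ mulKf // two_neq0.
Qed.
Lemma qform_skew n (A : 'M[C]_n) x : qform (skew_part A) x = (im (qform A x))%:C.
Proof.
rewrite /skew_part qformZ qformD qformN -conj_qform subcJ mulrAC mulKf //.
by rewrite mulf_neq0 ?two_neq0 ?i_neq0.
Qed.
End KeyLemma.

Section KeyLemma2.
Local Open Scope classical_set_scope.
Local Open Scope ring_scope.
Local Open Scope complex_scope.
Variable R : realType.
Local Notation C := (R[i]).
Local Notation re := (@complex.Re R).
Local Notation im := (@complex.Im R).

Definition Nf n (A : 'M[C]_n) x := re (sqnorm (A *m x)).
Definition bf n (A : 'M[C]_n) (t s : R) x := - t * re (qform A x) + s * im (qform A x).

Lemma sdp_form n (A : 'M[C]_n) (g tau t s : R) x :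
  qform (ctr A *m A - g%:C%:M + tau%:C *: (- (t%:C *: herm_part A) + s%:C *: skew_part A)) x
  = (Nf A x - g * re (sqnorm x) + tau * bf A t s x)%:C.
Proof.
have hP := qform_AA A x; have hH := qform_herm A x; have hK := qform_skew A x.
have hG := qform_scalar g%:C x.
rewrite /Nf /bf; move: hP hH hK hG.
move: (ctr A *m A) (herm_part A) (skew_part A) (g%:C%:M) => P H K G hP hH hK hG.
rewrite !(qformD, qformN, qformZ) hP hH hK hG.
rewrite (sqnorm_real (A *m x)) (sqnorm_real x).
move: (re (sqnorm (A *m x))) (re (sqnorm x)) (qform A x) => a b [z1 z2].
apply/eqP; rewrite eq_complex /=; apply/andP; split; apply/eqP; ring.
Qed.

Lemma bf_qform n (A : 'M[C]_n) t s x : bf A t s x = re (qform (((-t) +i* (-s)) *: A) x).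
Proof. by rewrite qformZ reM /bf /=; ring. Qed.

Lemma Nf_qform n (A : 'M[C]_n) x : Nf A x = re (qform (ctr A *m A) x).
Proof. by rewrite qform_AA. Qed.

Lemma lec0 (k : R) : ((k%:C : C) <= 0) = (k <= 0).
Proof. by rewrite lecE /= eqxx. Qed.

Lemma inf_eq (S : set R) mu : (forall eps, 0 < eps -> S (mu + eps)) ->
  (forall g, S g -> mu <= g) -> inf S = mu.
Proof.
move=> hS hl.
have ne : S !=set0 by exists (mu + 1); apply: hS.
apply/eqP; rewrite eq_le; apply/andP; split; last first.
  by apply: lb_le_inf => // g; apply: hl.
rewrite leNgt; apply/negP => lt.
have : inf S <= mu + (inf S - mu) / 2.
  apply: ge_inf; first by exists mu => g; apply: hl.
  by apply: hS; rewrite divr_gt0 // subr_gt0.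
lra.
Qed.

Lemma key_lemma n (A : 'M[C]_n) (th s : R) :
  exists mu, [/\ 0 <= mu, inf (sdp_feasible A th s) = mu,
   (forall x, unitv x -> 0 <= bf A (tan th) s x -> Nf A x <= mu),
   ((exists x, unitv x /\ 0 <= bf A (tan th) s x) ->
      exists x, [/\ unitv x, 0 <= bf A (tan th) s x & Nf A x = mu]) &
   (mu = 0 \/ exists x, [/\ unitv x, 0 <= bf A (tan th) s x & Nf A x = mu])].
Proof.
set t := tan th.
have feas : forall mu, 0 <= mu -> (forall x, unitv x -> 0 <= bf A t s x -> Nf A x <= mu) ->
    forall eps, 0 < eps -> sdp_feasible A th s (mu + eps).
  move=> mu mu0 hmu eps e0.
  have hyp : forall x, unitv x -> 0 <= re (qform (((-t) +i* (-s)) *: A) x) ->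
      eps <= re (qform ((mu + eps)%:C%:M - ctr A *m A) x).
    move=> x ux; rewrite -bf_qform => hb.
    rewrite qformD qformN qform_scalar qform_AA (sqnorm_real x) ux -rmorphM reD reN /= mulr1.
    have := hmu x ux hb; rewrite /Nf; lra.
  have [tau [t0 ht]] := slemma e0 hyp.
  split; first by rewrite addr_ge0 // ltW.
  exists tau; split => // x; rewrite sdp_form lec0.
  have := ht x; rewrite qformD qformN qform_scalar qform_AA -bf_qform reD reN.
  rewrite (sqnorm_real x) -rmorphM /= /Nf; lra.
have lower : forall g, sdp_feasible A th s g -> forall x, unitv x -> 0 <= bf A t s x -> Nf A x <= g.
  move=> g [g0 [tau [t0 hn]]] x ux hb.
  have := hn x; rewrite /qform -/(qform _ x) sdp_form lec0 ux mulr1 => h.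
  have : 0 <= tau * bf A t s x by rewrite mulr_ge0.
  lra.
have [[x1 [u1 b1]]|nF] := pselect (exists x, unitv x /\ 0 <= bf A t s x).
  have h1 : rcont (fun v : 'rV[R]_(n + n) => Nf A (cv v)).
    by apply: (rc_ext _ (rc_qform (M:=ctr A *m A))) => v; rewrite Nf_qform.
  have h2 : rcont (fun v : 'rV[R]_(n + n) => bf A t s (cv v)).
    by apply: (rc_ext _ (rc_qform (M:=((-t) +i* (-s)) *: A))) => v; rewrite bf_qform.
  have h3 : exists x, unitv x /\ 0 <= bf A t s x by exists x1.
  have [x0 [u0 b0 m0]] := evt h1 h2 h3.
  exists (Nf A x0); split.
  - exact: sqnorm_ge0.
  - apply: inf_eq; first by apply: feas => //; exact: sqnorm_ge0.
    by move=> g hg; apply: lower.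
  - exact: m0.
  - by move=> _; exists x0.
  - by right; exists x0.
exists 0; split.
- by [].
- apply: inf_eq; first by apply: feas => // x ux hb; exfalso; apply: nF; exists x.
  by move=> g [].
- by move=> x ux hb; exfalso; apply: nF; exists x.
- by move=> hF; exfalso; apply: nF.
- by left.
Qed.
End KeyLemma2.

Section Trig.
Local Open Scope ring_scope.
Local Open Scope complex_scope.
Variable R : realType.
Local Notation C := (R[i]).
Local Notation re := (@complex.Re R).
Local Notation im := (@complex.Im R).

Lemma pi2_gt0 : 0 < pi / 2 :> R. Proof. by rewrite divr_gt0 // pi_gt0. Qed.

Lemma sin_lt0_pi (a : R) : - pi < a < 0 -> sin a < 0.
Proof.
move=> /andP[h1 h2]; rewrite -[a]opprK sinN oppr_lt0; apply: sin_gt0_pi.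
apply/andP; split; lra.
Qed.

Lemma cos_th_gt0 (th : R) : 0 <= th < pi / 2 -> 0 < cos th.
Proof. move=> /andP[h1 h2]; apply: cos_gt0_pihalf; have := pi2_gt0 => h3; apply/andP; split; lra. Qed.

Lemma angle_exclude (th phi rho s : R) : 0 <= th < pi / 2 -> (s = 1 \/ s = -1) -> 0 < rho ->
  0 <= - tan th * (rho * cos phi) + s * (rho * sin phi) -> ~ (- th < phi < th).
Proof.
move=> hth hs rho0 hb /andP[p1 p2].
have c0 := cos_th_gt0 hth.
move: hth => /andP[t0 t1].
have pi0 := pi_gt0 R.
have hb' : 0 <= s * (sin phi * cos th) - sin th * cos phi.
  have : 0 <= cos th / rho * (- tan th * (rho * cos phi) + s * (rho * sin phi)).
    by rewrite mulr_ge0 // divr_ge0 // ltW.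
  have -> : cos th / rho * (- tan th * (rho * cos phi) + s * (rho * sin phi))
          = s * (sin phi * cos th) - sin th * cos phi.
    rewrite /tan; field; apply/andP; split; apply: lt0r_neq0 => //.
  done.
case: hs => hs; rewrite hs ?mul1r ?mulN1r in hb'.
  have : sin (phi - th) < 0 by apply: sin_lt0_pi; apply/andP; split; lra.
  rewrite sinB; lra.
have : 0 < sin (phi + th) by apply: sin_gt0_pi; apply/andP; split; lra.
rewrite sinD; lra.
Qed.

Lemma phase_ok (th phi : R) : 0 <= th < pi / 2 -> th <= phi -> phi * 2 < pi * 3 -> 0 < cos phi ->
  0 <= - tan th * cos phi + sin phi.
Proof.
move=> hth tp p3 cp.
have c0 := cos_th_gt0 hth.
move: hth => /andP[t0 t1].
have pi0 := pi_gt0 R.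
have ph2 : phi < pi / 2.
  rewrite ltNge; apply/negP => h.
  have : 0 <= sin (phi - pi / 2) by apply: sin_ge0_pi; apply/andP; split; lra.
  rewrite sinBpihalf; lra.
have : 0 <= sin (phi - th) by apply: sin_ge0_pi; apply/andP; split; lra.
rewrite sinB => h.
have -> : - tan th * cos phi + sin phi = (sin phi * cos th - cos phi * sin th) / cos th.
  by rewrite /tan; field; apply: lt0r_neq0.
by rewrite divr_ge0 // ltW.
Qed.
End Trig.

Section AngleSplit.
Local Open Scope ring_scope.
Local Open Scope complex_scope.
Variable R : realType.
Local Notation C := (R[i]).
Local Notation re := (@complex.Re R).
Local Notation im := (@complex.Im R).

Lemma angle_split (th : R) (z : C) : 0 <= th < pi / 2 -> 0 < re z ->
  (forall phi, is_angle z phi -> ~ (- th < phi < th)) ->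
  0 <= - tan th * re z + im z \/ 0 <= - tan th * re z + (-1) * im z.
Proof.
case: z => r q /= hth r0 hang.
have pi0 := pi_gt0 R.
move: (hth) => /andP[t0 t1].
set u := q / r.
have hw : 0 < Num.sqrt (1 + u ^+ 2) by rewrite sqrtr_gt0; have := sqr_ge0 u => ?; lra.
set w := Num.sqrt (1 + u ^+ 2) in hw.
have cphi : cos (atan u) = w^-1 by rewrite cos_atan.
have sphi : sin (atan u) = u * w^-1.
  have := atanK u; rewrite /tan cphi => h.
  by rewrite -[in RHS]h mulfVK // invr_eq0 lt0r_neq0.
have nz : Num.sqrt (r ^+ 2 + q ^+ 2) = r * w.
  have -> : r ^+ 2 + q ^+ 2 = r ^+ 2 * (1 + u ^+ 2).
    by rewrite /u; field; apply: lt0r_neq0.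
  by rewrite sqrtrM ?sqr_ge0 // sqrtr_sqr ger0_norm // ltW.
have ha : is_angle (r +i* q) (atan u).
  split.
    have := atan_gtNpi2 u; have := atan_ltpi2 u => ? ?; apply/andP; split; lra.
  rewrite normc_def /= nz /expj cphi sphi.
  apply/eqP; rewrite eq_complex reM imM /=; apply/andP; split; apply/eqP.
    by field; apply: lt0r_neq0.
  by rewrite /u; field; apply/andP; split; apply: lt0r_neq0.
have hex := hang _ ha.
have tanth : atan (tan th) = th.
  by apply: tanK; rewrite in_itv /=; apply/andP; split; lra.
have [le|lt] := lerP th (atan u).
  left.
  have : tan th <= u.
    rewrite leNgt; apply/negP => h; have := lt_atan h; rewrite tanth; lra.
  by rewrite /u ler_pdivlMr // => h; lra.
right.
have : atan u <= - th.
  rewrite leNgt; apply/negP => h; apply: hex; apply/andP; split => //.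
have : u <= - tan th.
  rewrite leNgt; apply/negP => h; have := lt_atan h; rewrite atanN tanth; lra.
by rewrite /u ler_pdivrMr // => h _; lra.
Qed.
End AngleSplit.

Section Accr.
Local Open Scope ring_scope.
Local Open Scope complex_scope.
Variable R : realType.
Local Notation C := (R[i]).
Local Notation re := (@complex.Re R).
Local Notation im := (@complex.Im R).

Lemma re_conj_mid (a e : C) : re (conjc a * e * a) = re e * (re a ^+ 2 + im a ^+ 2).
Proof. case: a => a1 a2; case: e => e1 e2; rewrite !(reM, imM, reJ, imJ) /=; ring. Qed.

Lemma re_qform_diag n (phi : 'I_n -> R) (y : 'cV[C]_n) :
  re (qform (diag_mx (\row_k expj (phi k))) y) =
  \sum_j cos (phi j) * (re (y j 0) ^+ 2 + im (y j 0) ^+ 2).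
Proof.
rewrite /qform mul_mx_diag mxE re_sum; apply: eq_bigr => j _.
rewrite !mxE re_conj_mid.
by [].
Qed.

Lemma re_pos n (A : 'M[C]_n) : accretive A -> forall x, x != 0 -> 0 < re (qform A x).
Proof.
move=> [_ [phi [[[T [Tu AE]] _] hphi]]] x x0.
rewrite AE qform_T re_qform_diag.
set y := T *m x.
have y0 : y != 0.
  apply/eqP => h; have ex : x = invmx T *m y by rewrite /y mulKmx.
  by move: x0; rewrite ex h mulmx0 eqxx.
have cp : forall j, 0 < cos (phi j) by move=> j; apply: cos_gt0_pihalf; exact: hphi.
have tge : forall j, 0 <= cos (phi j) * (re (y j 0) ^+ 2 + im (y j 0) ^+ 2).
  by move=> j; apply: mulr_ge0; [exact: ltW | rewrite addr_ge0 ?sqr_ge0].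
have s0 : 0 <= \sum_j cos (phi j) * (re (y j 0) ^+ 2 + im (y j 0) ^+ 2).
  by apply: sumr_ge0 => j _; exact: tge.
rewrite lt_neqAle s0 andbT.
apply/eqP => /esym h.
have hz := psumr_eq0P (fun j _ => tge j) h.
move: y0; rewrite (_ : y = 0) ?eqxx //; apply: sqnorm_eq0.
rewrite sqnorm_sum; apply: big1 => j _.
have := hz j isT; move/eqP; rewrite mulf_eq0 => /orP[/eqP c|/eqP //].
by move: (cp j); rewrite c ltxx.
Qed.
End Accr.

Section Final.
Local Open Scope ring_scope.
Local Open Scope complex_scope.
Variable R : realType.
Local Notation C := (R[i]).
Local Notation re := (@complex.Re R).
Local Notation im := (@complex.Im R).

Lemma im_conj_mid (a e : C) : im (conjc a * e * a) = im e * (re a ^+ 2 + im a ^+ 2).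
Proof. case: a => a1 a2; case: e => e1 e2; rewrite !(reM, imM, reJ, imJ) /=; ring. Qed.

Lemma im_sum' (I : Type) (r : seq I) (P : pred I) (F : I -> C) :
  im (\sum_(i <- r | P i) F i) = \sum_(i <- r | P i) im (F i).
Proof. exact: im_sum. Qed.

Lemma qform_diag_delta n (phi : 'I_n -> R) (k : 'I_n) (y : 'cV[C]_n) :
  (forall j, y j 0 = (j == k)%:R) ->
  re (qform (diag_mx (\row_j expj (phi j))) y) = cos (phi k) /\
  im (qform (diag_mx (\row_j expj (phi j))) y) = sin (phi k).
Proof.
move=> hy.
have hd : forall j, re (y j 0) ^+ 2 + im (y j 0) ^+ 2 = (j == k)%:R.
  by move=> j; rewrite hy; case: (j == k) => /=; rewrite ?expr1n ?expr0n /= ?addr0.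
split.
  rewrite re_qform_diag (bigD1 k) //= big1 ?addr0; first by rewrite hd eqxx mulr1.
  by move=> j /negPf jk; rewrite hd jk mulr0.
rewrite /qform mul_mx_diag mxE im_sum (bigD1 k) //= big1 ?addr0.
  by rewrite !mxE im_conj_mid hd eqxx mulr1.
by move=> j /negPf jk; rewrite !mxE im_conj_mid hd jk mulr0.
Qed.

Lemma imRM (k : R) (z : C) : im (k%:C * z) = k * im z.
Proof. by rewrite imM /= mul0r addr0. Qed.

Lemma bf_scale n (A : 'M[C]_n) t s x u k : qform A x = k%:C * qform A u ->
  bf A t s x = k * bf A t s u.
Proof. by move=> e; rewrite /bf e reRM imRM; ring. Qed.

Lemma unitv_neq0 n (x : 'cV[C]_n) : unitv x -> x != 0.
Proof.
move=> ux; apply/eqP => h; move: ux; rewrite /unitv h -qform1 qform0x /=.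
by move/eqP; rewrite eq_sym oner_eq0.
Qed.

Lemma exists_b1 n (A : 'M[C]_n) th phi : accretive A -> phases A phi -> 0 <= th < pi / 2 ->
  in_phase_range phi th -> exists x, unitv x /\ 0 <= bf A (tan th) 1 x.
Proof.
move=> acc [[T [Tu AE]] [imax [imin [hb [hspread hmid]]]]] hth [_ [i hi]].
have le : th <= phi imax by apply: le_trans hi _; case/andP: (hb i).
set e : 'cV[C]_n := delta_mx imax 0.
set x1 := invmx T *m e.
have Tx : T *m x1 = e by rewrite /x1 mulKVmx.
have x10 : x1 != 0.
  apply/eqP => h; move: Tx; rewrite h mulmx0 => /matrixP /(_ imax 0).
  rewrite /e !mxE !eqxx /= => /eqP; rewrite eq_sym oner_eq0.
  done.
have [hre him] : re (qform (diag_mx (\row_j expj (phi j))) e) = cos (phi imax) /\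
    im (qform (diag_mx (\row_j expj (phi j))) e) = sin (phi imax).
  by apply: qform_diag_delta => j; rewrite /e mxE eqxx andbT.
have qre : re (qform A x1) = cos (phi imax) by rewrite AE qform_T Tx.
have qim : im (qform A x1) = sin (phi imax) by rewrite AE qform_T Tx.
have cp : 0 < cos (phi imax) by rewrite -qre; exact: re_pos.
have b1 : 0 <= bf A (tan th) 1 x1.
  rewrite /bf qre qim mul1r; apply: phase_ok => //.
  have := hmid; case/andP => _ h2; move: hspread h2 => h1 h2.
  have : phi imin <= phi imax by case/andP: (hb imin).
  move=> h3; lra.
have [u [uu eu]] := normalize x10.
exists u; split => //.
have := bf_scale (tan th) 1 (eu A); move: b1 => /[swap] ->.
rewrite pmulr_rge0 //.
rewrite lt_neqAle sqnorm_ge0 andbT eq_sym; apply/eqP => /sqnorm_eq0 h.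
by move: x10; rewrite h eqxx.
Qed.
End Final.

Section Main.
Local Open Scope ring_scope.
Local Open Scope complex_scope.
Variable R : realType.
Local Notation C := (R[i]).
Local Notation re := (@complex.Re R).
Local Notation im := (@complex.Im R).

Lemma in_range n (A : 'M[C]_n) th s mu x : accretive A -> 0 <= th < pi / 2 ->
  (s = 1 \/ s = -1) -> 0 <= mu -> unitv x -> 0 <= bf A (tan th) s x -> Nf A x = mu ->
  gain_range A th (Num.sqrt mu).
Proof.
move=> acc hth hs mu0 ux hb hN.
split; first exact: sqrtr_ge0.
exists (qform A x); split.
  move=> phi [_ hz].
  have rp := re_pos acc (unitv_neq0 ux).
  set z := qform A x in hz rp hb.
  set rho := Num.sqrt (re z ^+ 2 + im z ^+ 2).
  have hre : re z = rho * cos phi by rewrite {1}hz normc_def reRM.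
  have him : im z = rho * sin phi by rewrite {1}hz normc_def imRM.
  have rho0 : 0 < rho.
    rewrite sqrtr_gt0; have := sqr_ge0 (im z); have : 0 < re z ^+ 2 by rewrite exprn_gt0.
    move=> ? ?; lra.
  apply: (angle_exclude hth hs rho0).
  by move: hb; rewrite /bf -/z hre him.
exists x; split; first by rewrite unitvE.
split => //.
by rewrite sqnorm_real -/(Nf A x) hN sqr_sqrtr.
Qed.

Lemma final_gen (G : set R) (I1 I2 mu1 mu2 : R) : I1 = mu1 -> I2 = mu2 ->
  is_max_of G (Num.max (Num.sqrt mu1) (Num.sqrt mu2)) ->
  is_max_of G (Num.max (Num.sqrt I1) (Num.sqrt I2)).
Proof. by move=> -> ->. Qed.

Lemma set_eq (G : set R) (a b : R) : a = b -> G b -> G a.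
Proof. by move=> ->. Qed.

End Main.

Theorem proposition4 (R : realType) (n : nat) (A : 'M[R[i]]_n) (theta : R)
  (phi : 'I_n -> R) :
  accretive A -> phases A phi -> 0 <= theta < pi / 2 -> in_phase_range phi theta ->
  is_max_of (gain_range A theta)
    (Num.max (Num.sqrt (inf (sdp_feasible A theta 1)))
             (Num.sqrt (inf (sdp_feasible A theta (-1))))).
Proof.
move=> acc ph hth inr.
have [mu1 [m10 inf1 ub1 ex1 _]] := key_lemma A theta 1.
have [mu2 [m20 inf2 ub2 _ ex2]] := key_lemma A theta (-1).
apply: (final_gen inf1 inf2).
have F1 := exists_b1 acc ph hth inr.
split.
  have [le|lt] := lerP mu2 mu1.
    have hm : Num.max (Num.sqrt mu1) (Num.sqrt mu2) = Num.sqrt mu1 by rewrite max_l // ler_wsqrtr.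
    apply: (set_eq hm).
    have [x [ux bx Nx]] := ex1 F1.
    exact: (in_range acc hth (or_introl erefl) m10 ux bx Nx).
  have hm : Num.max (Num.sqrt mu1) (Num.sqrt mu2) = Num.sqrt mu2.
    by rewrite max_r // ler_wsqrtr // ltW.
  apply: (set_eq hm).
  have [x [ux bx Nx]] : exists x, [/\ unitv x, 0 <= bf A (tan theta) (-1) x & Nf A x = mu2].
    have mu2p : 0 < mu2 := le_lt_trans m10 lt.
    case: ex2 => [e|ex]; last exact: ex.
    by move: mu2p; rewrite e ltxx.
  exact: (in_range acc hth (or_intror erefl) m20 ux bx Nx).
move=> h [h0 [z [hang [x [/unitvE ux [hz hN]]]]]].
have rp := re_pos acc (unitv_neq0 ux).
have hNx : Nf A x = h ^+ 2 by rewrite /Nf hN.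
have hh : h = Num.sqrt (h ^+ 2) by rewrite sqrtr_sqr ger0_norm.
rewrite -hz in hang.
have [b|b] := angle_split hth rp hang.
  have := ub1 x ux; rewrite /bf mul1r => /(_ b); rewrite hNx => le.
  by rewrite hh le_max; apply/orP; left; apply: ler_wsqrtr.
have := ub2 x ux; rewrite /bf => /(_ b); rewrite hNx => le.
by rewrite hh le_max; apply/orP; right; apply: ler_wsqrtr.
Qed.
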